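(* Let $P$ be a finite set of points in the plane, and let $T^*$ be a spanning tree of $P$ (with straight-line edges between points of $P$) that minimizes the Wiener index among all spanning trees of $P$. Then $T^*$ is planar, i.e., no two edges of $T^*$ cross each other.
   Context: For a spanning tree $T$ of $P$, each edge $(p,q)$ has weight equal to the Euclidean distance $|pq|$. For $p,q\in P$, $\delta_T(p,q)$ denotes the total weight of the unique path between $p$ and $q$ in $T$. The Wiener index of $T$ is $W(T)=\sum_{\{p,q\}\subseteq P}\delta_T(p,q)$, the sum over all pairs of points of $P$. *)

(* Defs.v *)
From HB Require Import structures.
From mathcomp Require Import all_boot all_order all_algebra.
From mathcomp Require Import reals.
From Stdlib Require Import ClassicalEpsilon.
Set Implicit Arguments. Unset Strict Implicit. Unset Printing Implicit Defensive.
Import Order.TTheory GRing.Theory Num.Theory.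
Local Open Scope ring_scope.

Section Geo.
Variables (R : realType) (T : finType) (pos : T -> R * R).

Definition edist (p q : T) : R :=
  Num.sqrt (((pos p).1 - (pos q).1) ^+ 2 + ((pos p).2 - (pos q).2) ^+ 2).

Definition simple_graph (e : rel T) : Prop :=
  (forall x y, e x y = e y x) /\ (forall x, ~~ e x x).

Definition acyclic (e : rel T) : Prop :=
  forall c : seq T, uniq c -> (3 <= size c)%N -> ~~ cycle e c.

Definition spanning_tree (e : rel T) : Prop :=
  [/\ simple_graph e, (forall x y, connect e x y) & acyclic e].

Fixpoint walk_weight (x : T) (s : seq T) : R :=
  match s with
  | [::] => 0
  | y :: s' => edist x y + walk_weight y s'
  end.

(* s is the (vertex list after p of a) simple path from p to q in e *)
Definition tpath (e : rel T) (p q : T) (s : seq T) : bool :=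
  [&& path e p s, last p s == q & uniq (p :: s)].

(* delta_T(p,q): weight of the (unique, in a tree) path from p to q *)
Definition delta (e : rel T) (p q : T) : R :=
  walk_weight p (epsilon (inhabits [::]) (fun s => tpath e p q s)).

(* Wiener index: sum over unordered pairs {p,q} (each counted once) *)
Definition wiener (e : rel T) : R :=
  \sum_(p : T) \sum_(q : T | (enum_rank p < enum_rank q)%N) delta e p q.

Definition segments_cross (p q r s : T) : Prop :=
  exists t u : R, [/\ 0 < t < 1, 0 < u < 1,
    (1 - t) * (pos p).1 + t * (pos q).1 = (1 - u) * (pos r).1 + u * (pos s).1 &
    (1 - t) * (pos p).2 + t * (pos q).2 = (1 - u) * (pos r).2 + u * (pos s).2].

Definition plane_tree (e : rel T) : Prop :=
  forall p q r s, e p q -> e r s ->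
    ~~ ((p == r) && (q == s) || (p == s) && (q == r)) ->
    ~ segments_cross p q r s.

End Geo.

(* Main.v *)
Require Import Defs.
From HB Require Import structures.
From mathcomp Require Import all_boot all_order all_algebra.
From mathcomp Require Import reals.
From mathcomp Require Import ring lra.
From Stdlib Require Import ClassicalEpsilon.
Set Implicit Arguments. Unset Strict Implicit. Unset Printing Implicit Defensive.
Import Order.TTheory GRing.Theory Num.Theory.

Section Graph.
Variable T : finType.
Implicit Types (e r : rel T) (x y u v p q : T) (s : seq T).

Definition rm e u v : rel T := fun x y =>
  e x y && ~~ ((x == u) && (y == v) || (x == v) && (y == u)).
Definition gadd e u v : rel T := fun x y =>
  e x y || ((x == u) && (y == v) || (x == v) && (y == u)).

Definition symr r := forall x y, r x y = r y x.

Lemma symr_rm e u v : symr e -> symr (rm e u v).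
Proof. by move=> He x y; rewrite /rm He; case: (e y x) => //=; rewrite orbC (andbC (x == u)) (andbC (x == v)). Qed.

Lemma symr_add e u v : symr e -> symr (gadd e u v).
Proof. by move=> He x y; rewrite /gadd He; case: (e y x) => //=; rewrite orbC (andbC (x == u)) (andbC (x == v)). Qed.

Lemma csym r : symr r -> forall x y, connect r x y = connect r y x.
Proof.
move=> H; have Hs : symmetric r by move=> x y; apply: H.
exact: (sym_connect_sym Hs).
Qed.

Lemma rm_sub e u v : subrel (rm e u v) e.
Proof. by move=> x y /andP[]. Qed.

Lemma closed_connect r (S : pred T) x y :
  (forall u v, r u v -> S u -> S v) -> S x -> connect r x y -> S y.
Proof.
move=> HS Sx /connectP[p Hp ->]; elim: p x Sx Hp => //= z p IH x Sx /andP[rxz Hp].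
by apply: IH Hp; apply: HS Sx.
Qed.

Lemma sub_connect r r' : subrel r r' -> forall x y, connect r x y -> connect r' x y.
Proof.
move=> H x y /connectP[p Hp ->]; apply/connectP; exists p => //.
exact: sub_path Hp.
Qed.

Lemma exists_tpath r x y : connect r x y -> exists s, tpath r x y s.
Proof.
move=> /connectP[p Hp ->]; case: (shortenP Hp) => p' Hp' Hu _.
by exists p'; rewrite /tpath Hp' Hu eqxx.
Qed.

Lemma tpath_connect r x y s : tpath r x y s -> connect r x y.
Proof. by case/and3P=> Hp /eqP <- _; apply/connectP; exists s. Qed.

Lemma path_comp r x s : path r x s -> all (connect r x) (x :: s).
Proof.
elim: s x => [|z s IH] x /=; first by rewrite connect0.
case/andP=> rxz Hp; rewrite connect0 /=.
have := IH z Hp; rewrite /= => /andP[_ Ha].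
rewrite connect1 //=; apply/allP => w /(allP Ha) Hw.
by apply: connect_trans (connect1 rxz) Hw.
Qed.

Lemma tpath_sub r r' x y s : subrel r r' -> tpath r x y s -> tpath r' x y s.
Proof. by move=> H /and3P[Hp Hl Hu]; rewrite /tpath (sub_path H Hp) Hl Hu. Qed.

Definition tree e := spanning_tree e.

Lemma tree_sym e : tree e -> symr e.
Proof. by case=> [[]]. Qed.

Lemma tree_irr e x : tree e -> e x x = false.
Proof. by case=> [[_ H]] _ _; apply/negbTE/H. Qed.

Lemma bridge e u v : tree e -> e u v -> ~ connect (rm e u v) u v.
Proof.
move=> Ht euv /exists_tpath[s /and3P[Hp /eqP Hl Hu]].
have Hsz : (2 <= size s)%N.
  case: s Hp Hl Hu => [|h [|h2 t]] //=.
    by move=> _ Huv; move: euv; rewrite Huv tree_irr.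
  by move=> /andP[Hr _] Hh _; move: Hr; rewrite /rm Hh !eqxx /= andbF.
case: Ht => [[Hsym _] _ Hac].
have := Hac (u :: s) Hu Hsz; apply/negP/negPn.
rewrite /cycle rcons_path (sub_path (@rm_sub e u v) Hp) /= Hl.
by rewrite Hsym.
Qed.

Lemma tpath_nil r p q : tpath r p q [::] -> q = p.
Proof. by case/and3P=> _ /eqP. Qed.

Lemma tpath_cons r p q x t : tpath r p q (x :: t) ->
  [/\ r p x, tpath r x q t & p \notin x :: t].
Proof.
case/and3P=> /= /andP[rpx Hp] Hl /andP[Hn Hu].
by split=> //; rewrite /tpath Hp Hl /= Hu.
Qed.

Lemma tpath_nil_cons r p x t : ~ tpath r p p (x :: t).
Proof.
move=> /tpath_cons[_ /and3P[_ /eqP Hl _] Hn].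
by move: (mem_last x t); rewrite Hl (negbTE Hn).
Qed.

Lemma path_avoid e p z x t : p \notin x :: t -> path e x t -> path (rm e p z) x t.
Proof.
move=> Hn; apply: (sub_in_path (P := predC1 p)); last first.
  by apply/allP => w Hw /=; apply: contraNneq Hn => <-.
move=> a b /= Ha Hb Hab; rewrite /rm Hab /=.
by rewrite (negbTE Ha) (negbTE Hb) !andbF.
Qed.

Lemma tpath_avoid e p z x q t : p \notin x :: t -> tpath e x q t -> tpath (rm e p z) x q t.
Proof.
by move=> Hn /and3P[Hp Hl Hu]; rewrite /tpath (path_avoid z Hn Hp) Hl Hu.
Qed.

Lemma tpath_uniq e p q s1 s2 : tree e -> tpath e p q s1 -> tpath e p q s2 -> s1 = s2.
Proof.
move=> Ht; have Hsym := tree_sym Ht.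
elim: s1 p s2 => [|x t IH] p [|x' t'] //.
- by move=> /tpath_nil -> /tpath_nil_cons.
- by move=> H /tpath_nil Hq; move: H; rewrite Hq => /tpath_nil_cons.
move=> H1 H2; have [epx Ht1 Hn1] := tpath_cons H1.
have [epx' Ht2 Hn2] := tpath_cons H2.
have [Exx|Hxx] := eqVneq x x'; first by subst x'; rewrite (IH _ _ Ht1 Ht2).
exfalso; apply: (bridge Ht epx).
have Hsr := symr_rm p x Hsym.
have C1 : connect (rm e p x) x q.
  by apply: (tpath_connect (s := t)); apply: tpath_avoid Ht1.
have C2 : connect (rm e p x) p q.
  apply: (tpath_connect (s := x' :: t')).
  move: H2 => /and3P[/= /andP[_ Hp2] Hl2 Hu2].
  rewrite /tpath /= Hl2 Hu2 andbT.
  rewrite (path_avoid x Hn2 Hp2) andbT /rm epx' /=.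
  rewrite eq_sym (negbTE Hxx) /= andbF /=. rewrite andbT.
  by apply/negP => /andP[/eqP Hpx _]; move: Hn1; rewrite Hpx mem_head.
by apply: (connect_trans C2); rewrite (csym Hsr).
Qed.

Lemma comp_cover e u v z : tree e -> e u v ->
  connect (rm e u v) u z || connect (rm e u v) v z.
Proof.
move=> Ht euv; have Hsym := tree_sym Ht.
have [_ Hc _] := Ht.
apply: (@closed_connect e (fun z => connect (rm e u v) u z || connect (rm e u v) v z) u z _ _ (Hc u z)); last by rewrite connect0.
move=> a b eab /orP Ha.
case Hr: (rm e u v a b).
  by case: Ha => Ha; apply/orP; [left|right]; apply: connect_trans Ha (connect1 Hr).
move: Hr; rewrite /rm eab /= => /negbFE /orP[] /andP[_ /eqP ->]; rewrite connect0 ?orbT //.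
Qed.

Lemma comp_disj e u v z : tree e -> e u v ->
  connect (rm e u v) u z -> connect (rm e u v) v z -> False.
Proof.
move=> Ht euv H1 H2; apply: (bridge Ht euv).
apply: connect_trans H1 _; rewrite csym //; exact: symr_rm (tree_sym Ht).
Qed.

Lemma addF F x y a b : gadd F x y a b ->
  ~~ ((a == x) && (b == y) || (a == y) && (b == x)) -> F a b.
Proof. by rewrite /gadd => /orP[//|H] /negP. Qed.

Lemma addF2 F x y a b : gadd F x y a b -> a != x -> b != x -> F a b.
Proof.
move=> H Ha Hb; apply: (addF H).
by rewrite (negbTE Ha) (negbTE Hb) !andbF.
Qed.

Lemma last_in (h : T) t : t != [::] -> last h t \in t.
Proof. by case: t => // w t' _ /=; apply: mem_last. Qed.

Lemma exchange e u v x y : tree e -> e u v ->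
  connect (rm e u v) u x -> connect (rm e u v) v y -> tree (gadd (rm e u v) x y).
Proof.
move=> Ht euv Hx Hy.
have Hsym := tree_sym Ht.
set F := rm e u v.
have HsF : symr F by apply: symr_rm.
have HFe : subrel F e by apply: rm_sub.
have nconn : ~ connect F x y.
  move=> Hxy; apply: (comp_disj (z := y) Ht euv) => //.
  exact: connect_trans Hx Hxy.
have Hxy : x != y by apply/negP => /eqP Exy; apply: nconn; rewrite Exy connect0.
have HFe' : subrel F (gadd F x y) by move=> a b H; rewrite /gadd H.
split.
- split; first by apply: symr_add.
  move=> z; rewrite /gadd negb_or; apply/andP; split.
    by apply/negP => /HFe; rewrite tree_irr.
  by apply/negP => /orP[] /andP[/eqP -> /eqP E]; move: Hxy; rewrite E eqxx.
- have Hx' : forall z, connect (gadd F x y) x z.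
    move=> z; case/orP: (comp_cover z Ht euv) => Hz.
      apply: (sub_connect HFe'); apply: connect_trans _ Hz.
      by rewrite csym.
    have Exy : gadd F x y x y by rewrite /gadd !eqxx orbT.
    apply: connect_trans (connect1 Exy) _.
    apply: (sub_connect HFe'); apply: connect_trans _ Hz.
    by rewrite csym.
  move=> a b; apply: connect_trans (Hx' b).
  by rewrite csym ?Hx' //; apply: symr_add.
- move=> c Huc Hsc; apply/negP => Hc.
  have [_ _ Hac] := Ht.
  case: (boolP (x \in c)) => Hxc; last first.
    have : cycle e c.
      apply: (sub_in_cycle (P := predC1 x)) Hc; last first.
        by apply/allP => w Hw /=; apply: contraNneq Hxc => <-.
      by move=> a b /= Ha Hb H; apply: HFe; apply: addF2 H Ha Hb.
    by apply/negP; apply: Hac.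
  case: (rot_to Hxc) => i s Hrot.
  have Hc' : cycle (gadd F x y) (x :: s) by rewrite -Hrot rot_cycle.
  have Hu' : uniq (x :: s) by rewrite -Hrot rot_uniq.
  have Hs' : (3 <= size (x :: s))%N by rewrite -Hrot size_rot.
  clear Hrot; case: s Hc' Hu' Hs' => [|h t] //= Hc' Hu' Hs'.
  move: Hc' => /andP[exh]; rewrite rcons_path => /andP[Hp elx].
  move: Hu' => /and3P[Hxn Hht0 Hut]. have Hu' : uniq (h :: t) by rewrite /= Hht0 Hut.
  have Hht : h \notin t by [].
  have tne : t != [::] by move: Hs'; case: t {Hp elx Hxn Hu' Hht Hht0 Hut}.
  set l := last h t in elx.
  have Hlt : l \in t by apply: last_in.
  have Hlh : l != h by apply: contraNneq Hht => <-.
  have Hxl : l != x by apply: contraNneq Hxn => <-; rewrite inE Hlt orbT.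
  have Hxh : h != x by apply: contraNneq Hxn => <-; rewrite mem_head.
  have HpF : path F h t.
    apply: (sub_in_path (P := predC1 x)) Hp; last first.
      by apply/allP => w Hw /=; apply: contraNneq Hxn => <-.
    by move=> a b /= Ha Hb H; apply: addF2 H Ha Hb.
  have Chl : connect F h l by apply/connectP; exists t.
  have bad : connect F x y -> False by [].
  have [Ehy|Nhy] := eqVneq h y.
    apply: bad; rewrite csym //; rewrite -Ehy; apply: connect_trans Chl _.
    apply: connect1; apply: (addF elx).
    by rewrite (negbTE Hxl) -Ehy (negbTE Hlh).
  have [Ely|Nly] := eqVneq l y.
    apply: bad; rewrite -Ely; apply: connect_trans _ Chl.
    apply: connect1; apply: (addF exh).
    by rewrite eqxx (negbTE Nhy) (negbTE Hxy).
  have Fxh : F x h.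
    by apply: (addF exh); rewrite eqxx (negbTE Nhy) (negbTE Hxy).
  have Flx : F l x.
    by apply: (addF elx); rewrite (negbTE Hxl) (negbTE Nly).
  have : cycle e (x :: h :: t).
    by rewrite /= rcons_path (HFe _ _ Fxh) (sub_path HFe HpF) (HFe _ _ Flx).
  by apply/negP; apply: Hac => //=; rewrite Hxn Hht0 Hut.
Qed.

Definition F4 e a b c d := rm (rm e a b) c d.

Record setup e a b c d : Prop := Setup {
  st_tree : tree e; st_ab : e a b; st_cd : e c d;
  st_bc : connect (F4 e a b c d) b c;
  st_nab : ~ connect (F4 e a b c d) a b;
  st_ncd : ~ connect (F4 e a b c d) c d;
  st_nad : ~ connect (F4 e a b c d) a d;
  st_cover : forall z, [|| connect (F4 e a b c d) a z,
     connect (F4 e a b c d) b z | connect (F4 e a b c d) d z] }.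

Lemma F4_sub1 e a b c d : subrel (F4 e a b c d) (rm e a b).
Proof. by move=> x y /andP[]. Qed.

Lemma F4_sub2 e a b c d : subrel (F4 e a b c d) (rm e c d).
Proof. by move=> x y /andP[/andP[H _] H2]; rewrite /rm H H2. Qed.

Lemma F4_sub e a b c d : subrel (F4 e a b c d) e.
Proof. by move=> x y /F4_sub1 /rm_sub. Qed.

Lemma rm_swap e u v : rm e u v =2 rm e v u.
Proof. by move=> x y; rewrite /rm orbC. Qed.

Lemma setup_of e a b c d : tree e -> e a b -> e c d ->
  ~~ ((a == c) && (b == d) || (a == d) && (b == c)) ->
  connect (rm e a b) b c -> connect (rm e c d) b c -> setup e a b c d.
Proof.
move=> Ht eab ecd Hne H1 H2.
have Hsym := tree_sym Ht.
set F := F4 e a b c d.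
have HsF : symr F by apply: symr_rm; apply: symr_rm.
have Hbc : connect F b c.
  have [s1 Hs1] := exists_tpath H1; have [s2 Hs2] := exists_tpath H2.
  have E : s1 = s2.
    by apply: (tpath_uniq Ht); [apply: tpath_sub Hs1|apply: tpath_sub Hs2]; apply: rm_sub.
  subst s2; apply/connectP; exists s1; last by case/and3P: Hs1 => _ /eqP ->.
  case/and3P: Hs1 => P1 _ _; case/and3P: Hs2 => P2 _ _.
  have : path [rel x y | rm e a b x y && rm e c d x y] b s1 by rewrite path_relI P1 P2.
  apply: sub_path => x y /= /andP[H1' /andP[_ H2']].
  by rewrite /F /F4 {1}/rm H1' H2'.
have Hba : rm e c d b a.
  rewrite /rm Hsym eab /=; move: Hne; apply: contra.
  by rewrite (eq_sym b) (eq_sym a) andbC orbC (andbC (b == d)).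
apply: Setup => //.
- by move=> /(sub_connect (@F4_sub1 e a b c d)); apply: bridge.
- by move=> /(sub_connect (@F4_sub2 e a b c d)); apply: bridge.
- move=> /(sub_connect (@F4_sub2 e a b c d)) Had.
  apply: (bridge Ht ecd).
  apply: connect_trans _ Had.
  apply: connect_trans (connect1 Hba).
  by rewrite csym //; apply: symr_rm.
- move=> z.
  have [_ Hc _] := Ht.
  apply: (@closed_connect e (fun z => [|| connect F a z, connect F b z | connect F d z]) a z _ _ (Hc a z)); last by rewrite connect0.
  move=> x y exy /= Hx.
  case HF: (F x y).
    by case/or3P: Hx => Hx; apply/or3P; [apply: Or31|apply: Or32|apply: Or33]; apply: connect_trans Hx (connect1 HF).
  move: HF; rewrite /F /F4 {1}/rm.
  case Hr: (rm e a b x y) => /=.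
    move=> /negbFE /orP[] /andP[_ /eqP ->]; first by rewrite connect0 !orbT.
    by rewrite Hbc orbT.
  move: Hr; rewrite /rm exy /= => /negbFE /orP[] /andP[_ /eqP ->] _.
    by rewrite connect0 orbT.
  by rewrite connect0.
Qed.

Definition dne (p q r s : T) := ~~ ((p == r) && (q == s) || (p == s) && (q == r)).

Lemma dne_sw1 (p q r s : T) : dne p q r s = dne q p r s.
Proof. by rewrite /dne orbC (andbC (q == r)) (andbC (q == s)). Qed.

Lemma dne_sw2 (p q r s : T) : dne p q r s = dne p q s r.
Proof. by rewrite /dne orbC. Qed.

Lemma dne_sym (p q r s : T) : dne p q r s = dne r s p q.
Proof. by rewrite /dne (eq_sym p) (eq_sym q) (eq_sym p s) (eq_sym q r) (andbC (s == p)). Qed.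

Lemma rmE e u v x y : rm e u v x y = e x y && dne x y u v.
Proof. by []. Qed.

Lemma orient e (p q r s : T) : tree e -> e p q -> e r s -> dne p q r s ->
  exists a b c d, [/\ (a = p /\ b = q) \/ (a = q /\ b = p),
     (c = r /\ d = s) \/ (c = s /\ d = r) & setup e a b c d].
Proof.
move=> Ht epq ers Hd.
have Hsym := tree_sym Ht.
have [a [b [Hab eab Cbr]]] : exists a b, [/\ (a = p /\ b = q) \/ (a = q /\ b = p),
    e a b & connect (rm e a b) b r].
  case/orP: (comp_cover r Ht epq) => H.
    exists q, p; split; [by right|by rewrite Hsym|].
    by rewrite (eq_connect (@rm_swap e q p)).
  by exists p, q; split => //; left.
have Dab : dne a b r s by case: Hab => [[-> ->]|[-> ->]]; rewrite // dne_sw1.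
have Cbs : connect (rm e a b) b s.
  apply: connect_trans Cbr (connect1 _).
  by rewrite rmE ers dne_sym.
have [c [d [Hcd ecd Ccb]]] : exists c d, [/\ (c = r /\ d = s) \/ (c = s /\ d = r),
    e c d & connect (rm e c d) c b].
  case/orP: (comp_cover b Ht ers) => H.
    by exists r, s; split; [left| |].
  exists s, r; split; [by right|by rewrite Hsym|].
  by rewrite (eq_connect (@rm_swap e s r)).
exists a, b, c, d; split => //.
have Dabcd : dne a b c d by case: Hcd => [[-> ->]|[-> ->]]; rewrite // dne_sw2.
apply: setup_of => //.
  by case: Hcd => [[-> _]|[-> _]].
by rewrite csym //; apply: symr_rm.
Qed.

Lemma F4_mirror e a b c d : F4 e d c b a =2 F4 e a b c d.
Proof.
move=> x y; rewrite /F4 !rmE (dne_sw2 x y d c) (dne_sw2 x y b a).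
by rewrite -!andbA (andbC (dne x y c d)).
Qed.

Lemma setup_mirror e a b c d : setup e a b c d -> setup e d c b a.
Proof.
case=> Ht eab ecd Hbc Nab Ncd Nad Hcov.
have Hsym := tree_sym Ht.
have E := eq_connect (@F4_mirror e a b c d).
have HsF : symr (F4 e a b c d) by apply: symr_rm; apply: symr_rm.
apply: Setup => //; rewrite ?E.
- by rewrite Hsym.
- by rewrite Hsym.
- by rewrite csym.
- by rewrite csym.
- by rewrite csym.
- by rewrite csym.
- move=> z; rewrite !E.
  case/or3P: (Hcov z) => H; apply/or3P.
  + by apply: Or33.
  + by apply: Or32; apply: connect_trans H; rewrite csym.
  + by apply: Or31.
Qed.

End Graph.

Local Open Scope ring_scope.

Section Geo.
Variable R : realType.
Implicit Types (P Q X : R * R).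

Definition pdist P Q : R := Num.sqrt ((P.1 - Q.1) ^+ 2 + (P.2 - Q.2) ^+ 2).

Lemma pdist_ge0 P Q : 0 <= pdist P Q.
Proof. exact: sqrtr_ge0. Qed.

Lemma pdist_sym P Q : pdist P Q = pdist Q P.
Proof. by rewrite /pdist -(sqrrN (P.1 - _)) -(sqrrN (P.2 - _)) !opprB. Qed.

Lemma pdist_sqr P Q : pdist P Q ^+ 2 = (P.1 - Q.1) ^+ 2 + (P.2 - Q.2) ^+ 2.
Proof. by rewrite sqr_sqrtr // addr_ge0 // sqr_ge0. Qed.

Lemma pdist_tri P Q X : pdist P X <= pdist P Q + pdist Q X.
Proof.
have H1 := pdist_sqr P Q; have H2 := pdist_sqr Q X.
have g1 := pdist_ge0 P Q; have g2 := pdist_ge0 Q X.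
set s1 := pdist P Q in H1 g1 *; set s2 := pdist Q X in H2 g2 *.
have Hs : 0 <= s1 + s2 by rewrite addr_ge0.
rewrite /pdist -(ger0_norm Hs) -sqrtr_sqr ler_sqrt ?sqr_ge0 //.
set x1 := P.1 - Q.1 in H1 *; set y1 := P.2 - Q.2 in H1 *.
set x2 := Q.1 - X.1 in H2 *; set y2 := Q.2 - X.2 in H2 *.
have -> : P.1 - X.1 = x1 + x2 by rewrite /x1 /x2; ring.
have -> : P.2 - X.2 = y1 + y2 by rewrite /y1 /y2; ring.
have CS : (x1 * x2 + y1 * y2) ^+ 2 <= (s1 * s2) ^+ 2.
  rewrite exprMn H1 H2.
  have -> : (x1 ^+ 2 + y1 ^+ 2) * (x2 ^+ 2 + y2 ^+ 2) = (x1 * x2 + y1 * y2) ^+ 2 + (x1 * y2 - x2 * y1) ^+ 2 by ring.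
  by rewrite lerDl sqr_ge0.
have p12 : 0 <= s1 * s2 by rewrite mulr_ge0.
have C2 : x1 * x2 + y1 * y2 <= s1 * s2.
  case: (lerP (x1 * x2 + y1 * y2) 0) => h; first by apply: le_trans h p12.
  by rewrite -(ler_pXn2r (n := 2)) // nnegrE ltW.
have -> : (s1 + s2) ^+ 2 = s1 ^+ 2 + s2 ^+ 2 + 2 * (s1 * s2) by ring.
rewrite H1 H2; nra.
Qed.

Lemma pdist_scale P Q X (k : R) : 0 <= k ->
  X.1 - P.1 = k * (Q.1 - P.1) -> X.2 - P.2 = k * (Q.2 - P.2) ->
  pdist P X = k * pdist P Q.
Proof.
move=> hk h1 h2; rewrite pdist_sym /pdist h1 h2 !exprMn -mulrDr sqrtrM ?sqr_ge0 //.
by rewrite sqrtr_sqr ger0_norm // -/(pdist Q P) pdist_sym.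
Qed.

Lemma pdist_eq0 P Q : pdist P Q = 0 -> P = Q.
Proof.
move=> /eqP; rewrite sqrtr_eq0 => H.
have h1 : (P.1 - Q.1) ^+ 2 = 0.
  by apply/eqP; rewrite eq_le sqr_ge0 andbT; apply: le_trans H; rewrite lerDl sqr_ge0.
have h2 : (P.2 - Q.2) ^+ 2 = 0.
  by apply/eqP; rewrite eq_le sqr_ge0 andbT; apply: le_trans H; rewrite lerDr sqr_ge0.
move: h1 h2 => /eqP; rewrite sqrf_eq0 subr_eq0 => /eqP e1 /eqP; rewrite sqrf_eq0 subr_eq0 => /eqP e2.
by move: e1 e2; case: P {H} => p1 p2; case: Q => q1 q2 /= -> ->.
Qed.

Lemma cross_ineq A B C D (t u : R) : 0 < t < 1 -> 0 < u < 1 ->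
  (1 - t) * A.1 + t * B.1 = (1 - u) * C.1 + u * D.1 ->
  (1 - t) * A.2 + t * B.2 = (1 - u) * C.2 + u * D.2 ->
  pdist A C + pdist B D <= pdist A B + pdist C D.
Proof.
move=> /andP[t0 t1] /andP[u0 u1] E1 E2.
pose O := ((1 - t) * A.1 + t * B.1, (1 - t) * A.2 + t * B.2).
have AO : pdist A O = t * pdist A B.
  by apply: pdist_scale; rewrite ?ltW //= ; ring.
have BO : pdist B O = (1 - t) * pdist B A.
  by apply: pdist_scale; rewrite ?subr_ge0 ?ltW //= ; ring.
have CO : pdist C O = u * pdist C D.
  by apply: pdist_scale; rewrite ?ltW //= ?E1 ?E2; ring.
have DO : pdist D O = (1 - u) * pdist D C.
  by apply: pdist_scale; rewrite ?subr_ge0 ?ltW //= ?E1 ?E2; ring.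
have T1 := pdist_tri A O C; have T2 := pdist_tri B O D.
rewrite (pdist_sym O C) (pdist_sym O D) in T1 T2.
rewrite (pdist_sym B A) (pdist_sym D C) in BO DO.
lra.
Qed.

Lemma degen_ineq A B D (t u : R) : 0 < t < 1 -> 0 < u < 1 ->
  (1 - t) * A.1 + t * B.1 = (1 - u) * B.1 + u * D.1 ->
  (1 - t) * A.2 + t * B.2 = (1 - u) * B.2 + u * D.2 ->
  pdist A D + pdist D B <= pdist A B \/ pdist D A + pdist A B <= pdist D B.
Proof.
move=> /andP[t0 t1] /andP[u0 u1] E1 E2.
have un : u != 0 by rewrite gt_eqF.
pose l := (1 - t) / u.
have l0 : 0 < l by rewrite /l divr_gt0 // subr_gt0.
have K1 : u * (D.1 - B.1) = (1 - t) * (A.1 - B.1).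
  by apply/eqP; rewrite -subr_eq0; apply/eqP; move: E1; lra.
have K2 : u * (D.2 - B.2) = (1 - t) * (A.2 - B.2).
  by apply/eqP; rewrite -subr_eq0; apply/eqP; move: E2; lra.
have F1 : D.1 - B.1 = l * (A.1 - B.1).
  by rewrite /l; apply: (mulfI un); rewrite K1; field.
have F2 : D.2 - B.2 = l * (A.2 - B.2).
  by rewrite /l; apply: (mulfI un); rewrite K2; field.
have ln : l != 0 by rewrite gt_eqF.
case: (lerP l 1) => hl.
  left.
  have BD : pdist B D = l * pdist B A by apply: pdist_scale; rewrite ?ltW.
  have AD : pdist A D = (1 - l) * pdist A B.
    apply: pdist_scale; rewrite ?subr_ge0 //.
      by rewrite -[D.1](subrK B.1) F1; ring.
    by rewrite -[D.2](subrK B.2) F2; ring.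
  rewrite AD (pdist_sym D B) BD (pdist_sym B A); lra.
right.
have G1 : A.1 - B.1 = l^-1 * (D.1 - B.1) by rewrite F1 mulrA mulVf // mul1r.
have G2 : A.2 - B.2 = l^-1 * (D.2 - B.2) by rewrite F2 mulrA mulVf // mul1r.
have BA : pdist B A = l^-1 * pdist B D by apply: pdist_scale; rewrite ?invr_ge0 ?ltW.
have DA : pdist D A = (1 - l^-1) * pdist D B.
  apply: pdist_scale; rewrite ?subr_ge0 ?invf_le1 ?ltW //.
    by rewrite -[A.1](subrK B.1) G1; ring.
  by rewrite -[A.2](subrK B.2) G2; ring.
rewrite DA (pdist_sym A B) BA (pdist_sym B D); lra.
Qed.

End Geo.

Section W.
Variables (R : realType) (T : finType) (pos : T -> R * R).
Implicit Types (e : rel T) (x y p q : T) (s : seq T).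

Local Notation dist := (edist pos).
Local Notation ww := (walk_weight pos).

Lemma distE x y : dist x y = pdist (pos x) (pos y).
Proof. by []. Qed.

Lemma dist_sym x y : dist x y = dist y x.
Proof. by rewrite !distE pdist_sym. Qed.

Lemma dist_ge0 x y : 0 <= dist x y.
Proof. by rewrite distE pdist_ge0. Qed.

Lemma dist0 x : dist x x = 0.
Proof. by rewrite /edist !subrr expr0n /= addr0 sqrtr0. Qed.

Lemma ww_cat x s1 s2 : ww x (s1 ++ s2) = ww x s1 + ww (last x s1) s2.
Proof. by elim: s1 x => [|y s1 IH] x /=; rewrite ?add0r // IH addrA. Qed.

Lemma ww_rcons x s y : ww x (rcons s y) = ww x s + dist (last x s) y.
Proof. by rewrite -cats1 ww_cat /= addr0. Qed.

Lemma ww_ge x s : dist x (last x s) <= ww x s.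
Proof.
elim: s x => [|y s IH] x /=; first by rewrite dist0.
apply: le_trans (pdist_tri (pos x) (pos y) (pos (last y s))) _.
by rewrite -!distE lerD2l.
Qed.

Lemma ww_rev x s : ww (last x s) (rev (belast x s)) = ww x s.
Proof.
elim: s x => [|y s IH] x //=.
rewrite rev_cons ww_rcons IH addrC dist_sym; congr (_ + _).
by case: s {IH} => //= z s; rewrite rev_cons last_rcons.
Qed.

Lemma delta_eq e p q s : tree e -> tpath e p q s -> delta pos e p q = ww p s.
Proof.
move=> Ht Hs; rewrite /delta.
have H : tpath e p q (epsilon (inhabits [::]) (fun s => tpath e p q s)).
  by apply: (epsilon_spec (inhabits [::]) (fun s => tpath e p q s)); exists s.
by rewrite (tpath_uniq Ht H Hs).
Qed.

Lemma tpath_refl e p : tpath e p p [::].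
Proof. by rewrite /tpath /= eqxx. Qed.

Lemma delta_refl e p : tree e -> delta pos e p p = 0.
Proof. by move=> Ht; rewrite (delta_eq Ht (tpath_refl e p)). Qed.

Lemma tpath_rev e p q s : symr e -> tpath e p q s -> tpath e q p (rev (belast p s)).
Proof.
move=> Hs /and3P[Hp /eqP Hl Hu].
have E : q :: rev (belast p s) = rev (p :: s).
  by rewrite [p :: s]lastI Hl rev_rcons.
rewrite /tpath.
have -> : path e q (rev (belast p s)).
  rewrite -Hl rev_path; apply: sub_path Hp => a b /=; by rewrite Hs.
rewrite E rev_uniq Hu andbT.
rewrite -Hl; case: s {Hp Hl Hu E} => //= z s; by rewrite rev_cons last_rcons.
Qed.

Lemma delta_sym e p q : tree e -> delta pos e p q = delta pos e q p.
Proof.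
move=> Ht; have [_ Hc _] := Ht.
have [s Hs] := exists_tpath (Hc p q).
rewrite (delta_eq Ht Hs) (delta_eq Ht (tpath_rev (tree_sym Ht) Hs)).
by case/and3P: Hs => _ /eqP <- _; rewrite ww_rev.
Qed.

Lemma glue_tpath G x p q y s1 s2 (K1 K2 : pred T) :
  tpath G x p s1 -> G p q -> tpath G q y s2 -> all K1 (x :: s1) -> all K2 (q :: s2) ->
  (forall z, K1 z -> K2 z -> False) -> tpath G x y (s1 ++ q :: s2).
Proof.
move=> /and3P[P1 /eqP L1 U1] Gpq /and3P[P2 L2 U2] A1 A2 Dj.
have U : uniq (x :: s1 ++ q :: s2).
  rewrite -cat_cons cat_uniq U1 U2 andbT.
  apply/hasPn => z Hz; apply/negP => Hz1.
  by apply: (Dj z); [apply: (allP A1)|apply: (allP A2)].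
by rewrite /tpath cat_path P1 L1 /= Gpq P2 last_cat /= L2; move: U => /= ->.
Qed.

Lemma glue_ww x p q s1 s2 : last x s1 = p ->
  ww x (s1 ++ q :: s2) = ww x s1 + dist p q + ww q s2.
Proof. by move=> L; rewrite ww_cat L /= addrA. Qed.

Section Forest.
Variables (e F : rel T).
Hypotheses (Ht : tree e) (HFe : subrel F e) (HsF : symr F).

Definition pi x y := epsilon (inhabits [::]) (fun s => tpath F x y s).

Lemma pi_tpath x y : connect F x y -> tpath F x y (pi x y).
Proof.
move=> /exists_tpath H; rewrite /pi.
exact: (epsilon_spec (inhabits [::]) (fun s => tpath F x y s) H).
Qed.

Lemma pi_all k x y : connect F k x -> connect F x y -> all (connect F k) (x :: pi x y).
Proof.
move=> Hk Hxy; have := path_comp (proj1 (andP (pi_tpath Hxy))).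
by move=> /allP H; apply/allP => z /H; apply: connect_trans.
Qed.

Lemma pi_ww G x y : tree G -> subrel F G -> connect F x y -> ww x (pi x y) = delta pos G x y.
Proof. by move=> HG HFG Hxy; rewrite (delta_eq HG (tpath_sub HFG (pi_tpath Hxy))). Qed.

Lemma cF k x y : connect F k x -> connect F k y -> connect F x y.
Proof. by move=> H1 H2; apply: connect_trans H2; rewrite csym. Qed.

Lemma dj k1 k2 : ~ connect F k1 k2 -> forall z, connect F k1 z -> connect F k2 z -> False.
Proof. by move=> H z H1 H2; apply: H; apply: connect_trans H1 _; rewrite csym. Qed.

Lemma d1 G k x y : tree G -> subrel F G -> connect F k x -> connect F k y ->
  delta pos G x y = delta pos e x y.
Proof. by move=> HG HFG H1 H2; rewrite -(pi_ww HG HFG) ?(pi_ww Ht HFe) //; apply: cF H1 H2. Qed.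

Lemma d2 G k1 k2 x p q y : tree G -> subrel F G -> G p q -> ~ connect F k1 k2 ->
  connect F k1 x -> connect F k1 p -> connect F k2 q -> connect F k2 y ->
  delta pos G x y = delta pos e x p + dist p q + delta pos e q y.
Proof.
move=> HG HFG Gpq N12 Hx Hp Hq Hy.
have Cxp := cF Hx Hp; have Cqy := cF Hq Hy.
have T1 := tpath_sub HFG (pi_tpath Cxp); have T2 := tpath_sub HFG (pi_tpath Cqy).
rewrite (delta_eq HG (glue_tpath T1 Gpq T2 (pi_all Hx Cxp) (pi_all Hq Cqy) (dj N12))).
rewrite (glue_ww (p := p)); last by case/and3P: T1 => _ /eqP.
by rewrite !(pi_ww Ht HFe).
Qed.

Lemma d3 G k1 k2 k3 x p1 q1 p2 q2 y : tree G -> subrel F G -> G p1 q1 -> G p2 q2 ->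
  ~ connect F k1 k2 -> ~ connect F k1 k3 -> ~ connect F k2 k3 ->
  connect F k1 x -> connect F k1 p1 -> connect F k2 q1 -> connect F k2 p2 ->
  connect F k3 q2 -> connect F k3 y ->
  delta pos G x y = delta pos e x p1 + dist p1 q1 + delta pos e q1 p2 + dist p2 q2 + delta pos e q2 y.
Proof.
move=> HG HFG G1 G2 N12 N13 N23 Hx Hp1 Hq1 Hp2 Hq2 Hy.
have C1 := cF Hx Hp1; have C2 := cF Hq1 Hp2; have C3 := cF Hq2 Hy.
have T1 := tpath_sub HFG (pi_tpath C1); have T2 := tpath_sub HFG (pi_tpath C2).
have T3 := tpath_sub HFG (pi_tpath C3).
have T23 := glue_tpath T2 G2 T3 (pi_all Hq1 C2) (pi_all Hq2 C3) (dj N23).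
have A23 : all (predU (connect F k2) (connect F k3)) (q1 :: pi q1 p2 ++ q2 :: pi q2 y).
  rewrite -cat_cons all_cat; apply/andP; split.
    by apply: sub_all (pi_all Hq1 C2) => z /= ->.
  by apply: sub_all (pi_all Hq2 C3) => z /= ->; rewrite orbT.
have Dj : forall z, connect F k1 z -> predU (connect F k2) (connect F k3) z -> False.
  by move=> z H1 /orP[] H2; [apply: (dj N12) H1 H2|apply: (dj N13) H1 H2].
rewrite (delta_eq HG (glue_tpath T1 G1 T23 (pi_all Hx C1) A23 Dj)).
rewrite (glue_ww (p := p1)); last by case/and3P: T1 => _ /eqP.
rewrite (glue_ww (p := p2)); last by case/and3P: T2 => _ /eqP.
by rewrite (pi_ww Ht HFe C1) (pi_ww Ht HFe C2) (pi_ww Ht HFe C3) !addrA.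
Qed.

End Forest.

Definition Wsum (f : T -> T -> R) :=
  \sum_(p : T) \sum_(q : T | (enum_rank p < enum_rank q)%N) f p q.

Lemma wienerE e : wiener pos e = Wsum (delta pos e).
Proof. by []. Qed.

Lemma Wsum_half f : (forall p q, f p q = f q p) -> (forall p, f p p = 0) ->
  Wsum f *+ 2 = \sum_p \sum_q f p q.
Proof.
move=> Hs H0.
have E1 : forall p, \sum_q f p q = \sum_(q | (enum_rank p < enum_rank q)%N) f p q
                                   + \sum_(q | (enum_rank q < enum_rank p)%N) f p q.
  move=> p; rewrite (bigID (fun q => (enum_rank p < enum_rank q)%N)) /=; congr (_ + _).
  rewrite (bigID (fun q => (enum_rank q < enum_rank p)%N)) /=.
  rewrite [X in _ + X]big1 ?addr0.
    by apply: eq_bigl => q; rewrite -leqNgt; apply: andb_idl; apply: ltnW.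
  move=> q /andP[]; rewrite -!leqNgt => h1 h2.
  have : enum_rank q = enum_rank p by apply: val_inj; apply/eqP; rewrite eqn_leq h1 h2.
  by move/enum_rank_inj => ->; apply: H0.
rewrite (eq_bigr _ (fun p _ => E1 p)) big_split /= mulr2n; congr (_ + _).
rewrite /Wsum.
under eq_bigr do rewrite big_mkcond.
rewrite exchange_big /=.
apply: eq_bigr => p _; rewrite big_mkcond; apply: eq_bigr => q _.
by case: ifP => // _; rewrite Hs.
Qed.

Lemma Wsum_lin (c1 c2 c3 : R) f1 f2 f3 :
  Wsum (fun p q => c1 * f1 p q + c2 * f2 p q - c3 * f3 p q) =
  c1 * Wsum f1 + c2 * Wsum f2 - c3 * Wsum f3.
Proof.
rewrite /Wsum !mulr_sumr -big_split -sumrB /=.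
by apply: eq_bigr => p _; rewrite !mulr_sumr -big_split -sumrB.
Qed.

Lemma sum2 (u v : T -> R) : \sum_x \sum_y (u x * v y) = (\sum_x u x) * (\sum_y v y).
Proof. by rewrite mulr_suml; apply: eq_bigr => x _; rewrite mulr_sumr. Qed.

End W.

Section Main.
Variables (R : realType) (T : finType) (pos : T -> R * R).
Hypothesis pos_inj : injective pos.
Local Notation dist := (edist pos).

Lemma dist_gt0 x y : x != y -> 0 < dist x y.
Proof.
move=> Hxy; rewrite lt_def dist_ge0 andbT; apply/eqP => H.
by move: Hxy; rewrite (pos_inj (pdist_eq0 H)) eqxx.
Qed.

Lemma ind_ge1 (A : pred T) a : A a -> 1 <= \sum_z (A z)%:R :> R.
Proof.
by move=> Ha; rewrite (bigD1 a) //= Ha lerDl sumr_ge0.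
Qed.

Section General.
Variables (e : rel T) (a b c d : T).
Hypothesis Hs : setup e a b c d.
Hypothesis Hbc : b != c.
Hypothesis Hcr : segments_cross pos a b c d.
Let F := F4 e a b c d.
Let Ht := st_tree Hs.
Let HsF : symr F.
Proof. by apply: symr_rm; apply: symr_rm; apply: tree_sym Ht. Qed.
Let HFe : subrel F e := @F4_sub _ e a b c d.
Let e1 := gadd (rm e a b) a c.
Let e2 := gadd (rm e c d) b d.
Let Cbc : connect F b c := st_bc Hs.
Let Nab : ~ connect F a b := st_nab Hs.
Let Nad : ~ connect F a d := st_nad Hs.
Let Nbd : ~ connect F b d.
Proof. by move=> H; apply: (st_ncd Hs); apply: connect_trans H; rewrite csym. Qed.

Let Ht1 : tree e1.
Proof.
apply: exchange; first exact: Ht; first exact: st_ab Hs; first exact: connect0.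
exact: sub_connect (@F4_sub1 _ e a b c d) _ _ Cbc.
Qed.
Let Ht2 : tree e2.
Proof.
apply: exchange; first exact: Ht; first exact: st_cd Hs; last exact: connect0.
rewrite csym; last by apply: symr_rm; apply: tree_sym Ht.
exact: sub_connect (@F4_sub2 _ e a b c d) _ _ Cbc.
Qed.
Let HF1 : subrel F e1.
Proof. by move=> x y /F4_sub1 H; rewrite /e1 /gadd H. Qed.
Let HF2 : subrel F e2.
Proof. by move=> x y /F4_sub2 H; rewrite /e2 /gadd H. Qed.

Let eab : e a b := st_ab Hs.
Let ecd : e c d := st_cd Hs.
Let C0 z : connect F z z := connect0 F z.
Let Nca : c != a.
Proof. by apply/eqP => E; apply: Nab; rewrite csym // -E. Qed.
Let Nda : d != a.
Proof. by apply/eqP => E; apply: Nad; rewrite E. Qed.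
Let e1ac : e1 a c.
Proof. by rewrite /e1 /gadd !eqxx orbT. Qed.
Let e1cd : e1 c d.
Proof. by rewrite /e1 /gadd rmE ecd /dne (negbTE Nca) (negbTE Nda) !andbF. Qed.
Let e2ab : e2 a b.
Proof.
by rewrite /e2 /gadd rmE eab /dne (eq_sym a c) (negbTE Nca) (eq_sym a d) (negbTE Nda).
Qed.
Let e2bd : e2 b d.
Proof. by rewrite /e2 /gadd !eqxx orbT. Qed.

Local Notation dd := (delta pos e).
Local Notation dd1 := (delta pos e1).
Local Notation dd2 := (delta pos e2).

Let iA x : R := (connect F a x)%:R.
Let iM x : R := (connect F b x)%:R.
Let iD x : R := (connect F d x)%:R.
Let al := \sum_z iA z.
Let mu := \sum_z iM z.
Let de := \sum_z iD z.
Let u y := iM y * (dd c y - dd b y).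
Let P := dist a c - dist a b.
Let Q := dist b d - dist c d.
Let Y := dist a c - dist a b - dd b c.
Let Z := dist b d - dist c d - dd b c.
Let g x y := de * dd1 x y + al * dd2 x y - (de + al) * dd x y.
Let G x y := de * P * (iA x * iM y) + de * P * (iM x * iA y) + de * (iA x * u y)
  + de * (u x * iA y) + al * Q * (iM x * iD y) + al * Q * (iD x * iM y)
  + (- al) * (u x * iD y) + (- al) * (iD x * u y)
  + (de * Y + al * Z) * (iA x * iD y) + (de * Y + al * Z) * (iD x * iA y).

Let D1 := d1 pos Ht HFe HsF.
Let D2 := d2 pos Ht HFe HsF.
Let D3 := d3 pos Ht HFe HsF.

Let clsA x : connect F a x -> [/\ iA x = 1, iM x = 0, iD x = 0 & u x = 0].
Proof.
move=> H; rewrite /u /iA /iM /iD H.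
case HM: (connect F b x); first by case: (dj HsF Nab H HM).
case HD: (connect F d x); first by case: (dj HsF Nad H HD).
by split => //; rewrite mul0r.
Qed.

Let clsM x : connect F b x -> [/\ iA x = 0, iM x = 1, iD x = 0 & u x = dd c x - dd b x].
Proof.
move=> H; rewrite /u /iA /iM /iD H.
case HA: (connect F a x); first by case: (dj HsF Nab HA H).
case HD: (connect F d x); first by case: (dj HsF Nbd H HD).
by split => //; rewrite mul1r.
Qed.

Let clsD x : connect F d x -> [/\ iA x = 0, iM x = 0, iD x = 1 & u x = 0].
Proof.
move=> H; rewrite /u /iA /iM /iD H.
case HA: (connect F a x); first by case: (dj HsF Nad HA H).
case HM: (connect F b x); first by case: (dj HsF Nbd HM H).
by split => //; rewrite mul0r.
Qed.

Let same k x y : connect F k x -> connect F k y -> g x y = G x y.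
Proof.
move=> Hx Hy; rewrite /g (D1 Ht1 HF1 Hx Hy) (D1 Ht2 HF2 Hx Hy).
have : forall z, connect F k z -> (connect F a z /\ connect F a k) \/ (connect F b z /\ connect F b k) \/ (connect F d z /\ connect F d k).
  move=> z Hz; case/or3P: (st_cover Hs k) => Hk.
  - by left; split=> //; apply: connect_trans Hk Hz.
  - by right; left; split=> //; apply: connect_trans Hk Hz.
  - by right; right; split=> //; apply: connect_trans Hk Hz.
move=> H.
case: (H x Hx) => [[Hx' Hk]|[[Hx' Hk]|[Hx' Hk]]].
- have Hy' := connect_trans Hk Hy.
  rewrite /G; case: (clsA Hx') => -> -> -> ->; case: (clsA Hy') => -> -> -> ->; ring.
- have Hy' := connect_trans Hk Hy.
  rewrite /G; case: (clsM Hx') => -> -> -> ->; case: (clsM Hy') => -> -> -> ->; ring.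
- have Hy' := connect_trans Hk Hy.
  rewrite /G; case: (clsD Hx') => -> -> -> ->; case: (clsD Hy') => -> -> -> ->; ring.
Qed.

Let caseAM x y : connect F a x -> connect F b y -> g x y = G x y.
Proof.
move=> Hx Hy.
have E0 : dd x y = dd x a + dist a b + dd b y := D2 Ht HFe eab Nab Hx (C0 a) (C0 b) Hy.
have E1 : dd1 x y = dd x a + dist a c + dd c y := D2 Ht1 HF1 e1ac Nab Hx (C0 a) Cbc Hy.
have E2 : dd2 x y = dd x a + dist a b + dd b y := D2 Ht2 HF2 e2ab Nab Hx (C0 a) (C0 b) Hy.
rewrite /g E0 E1 E2 /G.
case: (clsA Hx) => -> -> -> ->; case: (clsM Hy) => -> -> -> ->; rewrite /P; ring.
Qed.

Let caseAD x y : connect F a x -> connect F d y -> g x y = G x y.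
Proof.
move=> Hx Hy.
have E0 : dd x y = dd x a + dist a b + dd b c + dist c d + dd d y :=
  D3 Ht HFe eab ecd Nab Nad Nbd Hx (C0 a) (C0 b) Cbc (C0 d) Hy.
have E1 : dd1 x y = dd x a + dist a c + dd c c + dist c d + dd d y :=
  D3 Ht1 HF1 e1ac e1cd Nab Nad Nbd Hx (C0 a) Cbc Cbc (C0 d) Hy.
have E2 : dd2 x y = dd x a + dist a b + dd b b + dist b d + dd d y :=
  D3 Ht2 HF2 e2ab e2bd Nab Nad Nbd Hx (C0 a) (C0 b) (C0 b) (C0 d) Hy.
rewrite /g E0 E1 E2 /G !(delta_refl pos _ Ht).
case: (clsA Hx) => -> -> -> ->; case: (clsD Hy) => -> -> -> ->; rewrite /Y /Z; ring.
Qed.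

Let caseMD x y : connect F b x -> connect F d y -> g x y = G x y.
Proof.
move=> Hx Hy.
have E0 : dd x y = dd x c + dist c d + dd d y := D2 Ht HFe ecd Nbd Hx Cbc (C0 d) Hy.
have E1 : dd1 x y = dd x c + dist c d + dd d y := D2 Ht1 HF1 e1cd Nbd Hx Cbc (C0 d) Hy.
have E2 : dd2 x y = dd x b + dist b d + dd d y := D2 Ht2 HF2 e2bd Nbd Hx (C0 b) (C0 d) Hy.
rewrite /g E0 E1 E2 /G.
case: (clsM Hx) => -> -> -> ->; case: (clsD Hy) => -> -> -> ->.
rewrite (delta_sym pos x c Ht) (delta_sym pos x b Ht) /Q; ring.
Qed.

Let g_sym x y : g x y = g y x.
Proof.
by rewrite /g (delta_sym pos x y Ht) (delta_sym pos x y Ht1) (delta_sym pos x y Ht2).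
Qed.

Let G_sym x y : G x y = G y x.
Proof. rewrite /G; ring. Qed.

Let gG x y : g x y = G x y.
Proof.
case/or3P: (st_cover Hs x) => Hx; case/or3P: (st_cover Hs y) => Hy.
- exact: same Hx Hy.
- exact: caseAM.
- exact: caseAD.
- by rewrite g_sym G_sym; apply: caseAM.
- exact: same Hx Hy.
- exact: caseMD.
- by rewrite g_sym G_sym; apply: caseAD.
- by rewrite g_sym G_sym; apply: caseMD.
- exact: same Hx Hy.
Qed.

Let K := \sum_z u z.

Lemma sum2c (k : R) (f h : T -> R) :
  \sum_x \sum_y k * (f x * h y) = k * ((\sum_x f x) * (\sum_y h y)).
Proof. by rewrite -sum2 mulr_sumr; apply: eq_bigr => x _; rewrite mulr_sumr. Qed.

Let SG : \sum_x \sum_y G x y = 2 * al * de * (mu * (P + Q) + de * Y + al * Z).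
Proof.
rewrite /G.
under eq_bigr => x _ do rewrite !big_split /=.
rewrite !big_split /= !sum2c -/al -/mu -/de -/K.
ring.
Qed.

Let g0 x : g x x = 0.
Proof. by rewrite /g (delta_refl pos x Ht) (delta_refl pos x Ht1) (delta_refl pos x Ht2); ring. Qed.

Lemma general_improve : exists e', tree e' /\ wiener pos e' < wiener pos e.
Proof.
case: (ltrP (wiener pos e1) (wiener pos e)) => h1; first by exists e1.
case: (ltrP (wiener pos e2) (wiener pos e)) => h2; first by exists e2.
exfalso.
have Hw : Wsum g = de * wiener pos e1 + al * wiener pos e2 - (de + al) * wiener pos e.
  by rewrite !wienerE -Wsum_lin.
have Hg := Wsum_half g_sym g0.
rewrite (eq_bigr (fun x => \sum_y G x y)) in Hg; last first.
  by move=> x _; apply: eq_bigr => y _; apply: gG.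
rewrite SG in Hg.
have al1 : 1 <= al by apply: (ind_ge1 (A := connect F a)); exact: C0.
have de1 : 1 <= de by apply: (ind_ge1 (A := connect F d)); exact: C0.
have mu0 : 0 <= mu by apply: sumr_ge0 => z _; rewrite ler0n.
have [t [v [t01 v01 E1 E2]]] := Hcr.
have X0 := cross_ineq t01 v01 E1 E2.
rewrite -!distE in X0.
have Cbc' : dist b c <= dd b c.
  have [_ Hc _] := Ht; have [s Hsp] := exists_tpath (Hc b c).
  rewrite (delta_eq pos Ht Hsp); case/and3P: (Hsp) => _ /eqP L _.
  by have := ww_ge pos b s; rewrite L.
have bc0 := dist_gt0 Hbc.
have T1 : dist a c <= dist a b + dist b c by rewrite !distE pdist_tri.
have T2 : dist b d <= dist b c + dist c d by rewrite !distE pdist_tri.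
have Y0 : Y <= 0 by rewrite /Y; lra.
have Z0 : Z <= 0 by rewrite /Z; lra.
have YZ : Y + Z < 0 by rewrite /Y /Z; lra.
have PQ : P + Q <= 0 by rewrite /P /Q; lra.
have i1 : mu * (P + Q) <= 0 by rewrite mulr_ge0_le0.
have i2 : de * Y <= Y by rewrite -subr_le0 -{2}(mul1r Y) -mulrBl mulr_ge0_le0 // subr_ge0.
have i3 : al * Z <= Z by rewrite -subr_le0 -{2}(mul1r Z) -mulrBl mulr_ge0_le0 // subr_ge0.
have neg : mu * (P + Q) + de * Y + al * Z < 0 by lra.
have pos2 : 0 < 2 * al * de by rewrite !mulr_gt0 //; lra.
have : 2 * al * de * (mu * (P + Q) + de * Y + al * Z) < 0 by rewrite pmulr_rlt0.
have : 0 <= Wsum g.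
  rewrite Hw.
  have : 0 <= de * (wiener pos e1 - wiener pos e) + al * (wiener pos e2 - wiener pos e).
    by rewrite addr_ge0 // mulr_ge0 // ?subr_ge0 //; lra.
  by move=> H; apply: le_trans H _; rewrite le_eqVlt; apply/orP; left; apply/eqP; ring.
rewrite -Hg mulr2n; lra.
Qed.

End General.

Section Degen.
Variables (e : rel T) (a b d : T).
Hypothesis Hs : setup e a b b d.
Hypothesis Hgeo : dist a d + dist d b <= dist a b.
Let F := F4 e a b b d.
Let Ht := st_tree Hs.
Let HsF : symr F.
Proof. by apply: symr_rm; apply: symr_rm; apply: tree_sym Ht. Qed.
Let HFe : subrel F e := @F4_sub _ e a b b d.
Let Nab : ~ connect F a b := st_nab Hs.
Let Nad : ~ connect F a d := st_nad Hs.
Let Nbd : ~ connect F b d := st_ncd Hs.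
Let Ndb : ~ connect F d b.
Proof. by rewrite csym. Qed.
Let C0 z : connect F z z := connect0 F z.
Let eab : e a b := st_ab Hs.
Let ebd : e b d := st_cd Hs.
Let Nda : d != a.
Proof. by apply/eqP => E; apply: Nad; rewrite E. Qed.
Let Ndb' : d != b.
Proof. by apply/eqP => E; apply: Nbd; rewrite E. Qed.
Let e3 := gadd (rm e a b) a d.
Let rbd : rm e a b b d.
Proof. by rewrite rmE ebd /dne (negbTE Ndb') (negbTE Nda) !andbF. Qed.
Let Ht3 : tree e3.
Proof. by apply: exchange => //; apply: connect1. Qed.
Let HF3 : subrel F e3.
Proof. by move=> x y /F4_sub1 H; rewrite /e3 /gadd H. Qed.
Let e3ad : e3 a d.
Proof. by rewrite /e3 /gadd !eqxx orbT. Qed.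
Let e3bd : e3 b d.
Proof. by rewrite /e3 /gadd rbd. Qed.
Let e3db : e3 d b.
Proof.
have S := symr_add a d (symr_rm a b (tree_sym Ht)).
by rewrite /e3 (S d b) -/e3.
Qed.

Local Notation dd := (delta pos e).
Local Notation dd3 := (delta pos e3).
Let h x y := dd3 x y - dd x y.

Let D1 := d1 pos Ht HFe HsF.
Let D2 := d2 pos Ht HFe HsF.
Let D3 := d3 pos Ht HFe HsF.

Let h_sym x y : h x y = h y x.
Proof. by rewrite /h (delta_sym pos x y Ht) (delta_sym pos x y Ht3). Qed.

Let hsame k x y : connect F k x -> connect F k y -> h x y = 0.
Proof. by move=> Hx Hy; rewrite /h (D1 Ht3 HF3 Hx Hy) subrr. Qed.

Let hAM x y : connect F a x -> connect F b y -> h x y <= 0.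
Proof.
move=> Hx Hy.
have E3 : dd3 x y = dd x a + dist a d + dd d d + dist d b + dd b y :=
  D3 Ht3 HF3 e3ad e3db Nad Nab Ndb Hx (C0 a) (C0 d) (C0 d) (C0 b) Hy.
have E0 : dd x y = dd x a + dist a b + dd b y := D2 Ht HFe eab Nab Hx (C0 a) (C0 b) Hy.
rewrite /h E3 E0 (delta_refl pos d Ht); move: Hgeo; lra.
Qed.

Let hAD x y : connect F a x -> connect F d y -> h x y <= - dist b d - dist b d.
Proof.
move=> Hx Hy.
have E3 : dd3 x y = dd x a + dist a d + dd d y := D2 Ht3 HF3 e3ad Nad Hx (C0 a) (C0 d) Hy.
have E0 : dd x y = dd x a + dist a b + dd b b + dist b d + dd d y :=
  D3 Ht HFe eab ebd Nab Nad Nbd Hx (C0 a) (C0 b) (C0 b) (C0 d) Hy.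
rewrite /h E3 E0 (delta_refl pos b Ht); have := Hgeo; rewrite (dist_sym pos d b); lra.
Qed.

Let hMD x y : connect F b x -> connect F d y -> h x y = 0.
Proof.
move=> Hx Hy.
have E3 : dd3 x y = dd x b + dist b d + dd d y := D2 Ht3 HF3 e3bd Nbd Hx (C0 b) (C0 d) Hy.
have E0 : dd x y = dd x b + dist b d + dd d y := D2 Ht HFe ebd Nbd Hx (C0 b) (C0 d) Hy.
by rewrite /h E3 E0 subrr.
Qed.

Let bd0 : 0 < dist b d.
Proof. by apply: dist_gt0; rewrite eq_sym. Qed.

Let hle x y : h x y <= 0.
Proof.
case/or3P: (st_cover Hs x) => Hx; case/or3P: (st_cover Hs y) => Hy.
- by rewrite (hsame Hx Hy).
- exact: hAM.
- by apply: le_trans (hAD Hx Hy) _; have := bd0; lra.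
- by rewrite h_sym; apply: hAM.
- by rewrite (hsame Hx Hy).
- by rewrite (hMD Hx Hy).
- by rewrite h_sym; apply: le_trans (hAD Hy Hx) _; have := bd0; lra.
- by rewrite h_sym (hMD Hy Hx).
- by rewrite (hsame Hx Hy).
Qed.

Let hlt : h a d < 0.
Proof. by apply: le_lt_trans (hAD (C0 a) (C0 d)) _; have := bd0; lra. Qed.

Lemma degen_improve : exists e', tree e' /\ wiener pos e' < wiener pos e.
Proof.
exists e3; split => //.
have Hw : Wsum h = wiener pos e3 - wiener pos e.
  rewrite !wienerE /Wsum -sumrB; apply: eq_bigr => p _; by rewrite -sumrB.
have h0 : forall x, h x x = 0 by move=> x; rewrite (hsame (C0 x) (C0 x)).
have Hg := Wsum_half h_sym h0.
have S : \sum_x \sum_y h x y < 0.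
  rewrite (bigD1 a) //= (bigD1 d) //=.
  have s1 : \sum_(y | y != d) h a y <= 0 by apply: sumr_le0 => y _; apply: hle.
  have s2 : \sum_(x | x != a) \sum_y h x y <= 0.
    by apply: sumr_le0 => x _; apply: sumr_le0 => y _; apply: hle.
  have := hlt; lra.
rewrite -subr_lt0 -Hw; move: S; rewrite -Hg mulr2n; lra.
Qed.

End Degen.

Lemma cross_sw1 p q r s : segments_cross pos p q r s -> segments_cross pos q p r s.
Proof.
case=> t [u [/andP[t0 t1] u01 E1 E2]]; exists (1 - t), u; split => //.
- by apply/andP; split; lra.
- by rewrite -E1; ring.
- by rewrite -E2; ring.
Qed.

Lemma cross_sw2 p q r s : segments_cross pos p q r s -> segments_cross pos p q s r.
Proof.
case=> t [u [t01 /andP[u0 u1] E1 E2]]; exists t, (1 - u); split => //.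
- by apply/andP; split; lra.
- by rewrite E1; ring.
- by rewrite E2; ring.
Qed.

End Main.

Unset Implicit Arguments.

Theorem theorem1 (R : realType) (T : finType) (pos : T -> R * R)
  (pos_inj : injective pos) (e : rel T)
  (He : spanning_tree e)
  (Hmin : forall e' : rel T, spanning_tree e' -> wiener pos e <= wiener pos e') :
  plane_tree pos e.
Proof.
move=> p q r s epq ers Hne Hcr.
have [a [b [c [d [Hab Hcd Hset]]]]] := orient He epq ers Hne.
have Hcr' : segments_cross pos a b c d.
  case: Hab => [[-> ->]|[-> ->]]; case: Hcd => [[-> ->]|[-> ->]] //.
  - exact: cross_sw2.
  - exact: cross_sw1.
  - exact: cross_sw1 (cross_sw2 Hcr).
have contra : (exists e', tree e' /\ wiener pos e' < wiener pos e) -> False.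
  by case=> e' [Ht' Hlt]; have := Hmin e' Ht'; rewrite leNgt Hlt.
case: (eqVneq b c) => [Ebc|Nbc]; last exact: contra (general_improve pos_inj Hset Nbc Hcr').
subst c.
have [t [u [t01 u01 E1 E2]]] := Hcr'.
case: (degen_ineq t01 u01 E1 E2) => H.
  exact: contra (degen_improve pos_inj Hset H).
exact: contra (degen_improve pos_inj (setup_mirror Hset) H).
Qed.
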